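(* Let $n\ge1$, let $\preceq$ be an admissible order on $L([0,1])$. Then: (i) for $F\colon L([0,1])^2\to L([0,1])$ with $F(X,\mathbf1)=X$ for all $X$ and $F$ non-decreasing in the second variable, the IV Sugeno-like $FG$-functional $\mathbf S_m^{F,\vee}$ is idempotent for every IV fuzzy measure $m$; (ii) for $G=\vee$ or $G=\mathrm{Proj}_1$, the functional $\mathbf S_m^{\wedge,G}$ is idempotent for every IV fuzzy measure $m$; (iii) $\mathbf S_m^{\wedge,\vee}$ is idempotent for every IV fuzzy measure $m$.
   Context: $N=\{1,\dots,n\}$. $L([0,1])=\{[a,b]:0\le a\le b\le1\}$, $\mathbf0=[0,0]$, $\mathbf1=[1,1]$. An admissible order $\preceq$ is a total order on $L([0,1])$ such that $[a,b]\preceq[c,d]$ whenever $a\le c$ and $b\le d$. $\vee,\wedge$ denote maximum and minimum w.r.t. $\preceq$; monotonicity is w.r.t. $\preceq$; $\mathrm{Proj}_1(X_1,\dots,X_n)=X_1$. Idempotent means $\mathbf S(X,\dots,X)=X$ for all $X$. An IV fuzzy measure w.r.t. $\preceq$ is $m\colon2^N\to L([0,1])$ with $m(\emptyset)=\mathbf0$, $m(N)=\mathbf1$, $m(A)\preceq m(B)$ for $A\subseteq B$. For a permutation $\sigma$, $E_{\sigma(i)}=\{\sigma(i),\dots,\sigma(n)\}$. The IV Sugeno-like $FG$-functional is $\mathbf S_m^{F,G}(X_1,\dots,X_n)=G\big(F(X_{\sigma(1)},m(E_{\sigma(1)})),\dots,F(X_{\sigma(n)},m(E_{\sigma(n)}))\big)$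 with $\sigma$ any permutation such that $X_{\sigma(1)}\preceq\dots\preceq X_{\sigma(n)}$; it is defined when this value is independent of the choice of $\sigma$ for all inputs. *)

(* Defs.v *)
From HB Require Import structures.
From mathcomp Require Import all_boot all_order all_algebra all_fingroup.
From mathcomp Require Import reals.
Set Implicit Arguments. Unset Strict Implicit. Unset Printing Implicit Defensive.
Import Order.TTheory GRing.Theory Num.Theory.
Local Open Scope ring_scope.

Section IVDefs.
Variable R : realType.

Record IV := mkIV { lo : R; hi : R; ivP : (0 <= lo) && (lo <= hi) && (hi <= 1) }.

Lemma iv0_proof : (0 <= 0 :> R) && (0 <= 0 :> R) && (0 <= 1 :> R).
Proof. by rewrite lexx ler01. Qed.
Lemma iv1_proof : (0 <= 1 :> R) && (1 <= 1 :> R) && (1 <= 1 :> R).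
Proof. by rewrite lexx ler01. Qed.

Definition iv0 : IV := mkIV iv0_proof.
Definition iv1 : IV := mkIV iv1_proof.

Definition admissible (le : IV -> IV -> bool) : Prop :=
  [/\ (forall X, le X X),
      (forall X Y, le X Y -> le Y X -> X = Y),
      (forall X Y Z, le X Y -> le Y Z -> le X Z),
      (forall X Y, le X Y || le Y X) &
      (forall X Y, lo X <= lo Y -> hi X <= hi Y -> le X Y)].

Definition ivmax (le : IV -> IV -> bool) (X Y : IV) : IV := if le X Y then Y else X.
Definition ivmin (le : IV -> IV -> bool) (X Y : IV) : IV := if le X Y then X else Y.

(* n-ary maximum w.r.t. le (iv0 is the bottom of any admissible order) *)
Definition ivMax (n : nat) (le : IV -> IV -> bool) (Y : 'I_n -> IV) : IV :=
  foldr (ivmax le) iv0 [seq Y i | i <- enum 'I_n].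

Definition Proj1 (n : nat) (hn : (0 < n)%N) (Y : 'I_n -> IV) : IV := Y (Ordinal hn).

Definition IVfuzzy_measure (n : nat) (le : IV -> IV -> bool) (m : {set 'I_n} -> IV) : Prop :=
  [/\ m set0 = iv0, m [set: 'I_n] = iv1 &
      (forall A B : {set 'I_n}, A \subset B -> le (m A) (m B))].

(* E_{sigma(i)} = {sigma(i), ..., sigma(n)} (positions are 0-based) *)
Definition Eset (n : nat) (s : 'S_n) (i : 'I_n) : {set 'I_n} :=
  [set s j | j in [pred j : 'I_n | (i <= j)%N]].

Definition sorting (n : nat) (le : IV -> IV -> bool) (s : 'S_n) (X : 'I_n -> IV) : Prop :=
  forall i j : 'I_n, (i <= j)%N -> le (X (s i)) (X (s j)).

Definition SFG_val (n : nat) (F : IV -> IV -> IV) (G : ('I_n -> IV) -> IV)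
  (m : {set 'I_n} -> IV) (s : 'S_n) (X : 'I_n -> IV) : IV :=
  G (fun i => F (X (s i)) (m (Eset s i))).

Definition SFG_defined (n : nat) (le : IV -> IV -> bool) (F : IV -> IV -> IV)
  (G : ('I_n -> IV) -> IV) (m : {set 'I_n} -> IV) : Prop :=
  forall (X : 'I_n -> IV) (s t : 'S_n), sorting le s X -> sorting le t X ->
    SFG_val F G m s X = SFG_val F G m t X.

Definition SFG_idempotent (n : nat) (le : IV -> IV -> bool) (F : IV -> IV -> IV)
  (G : ('I_n -> IV) -> IV) (m : {set 'I_n} -> IV) : Prop :=
  forall (X : IV) (s : 'S_n), sorting le s (fun _ => X) ->
    SFG_val F G m s (fun _ => X) = X.

End IVDefs.

(* Main.v *)
Require Import Defs.
From mathcomp Require Import all_boot all_order all_algebra all_fingroup.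
From mathcomp Require Import reals.
Set Implicit Arguments. Unset Strict Implicit. Unset Printing Implicit Defensive.
Import Order.TTheory GRing.Theory Num.Theory.
Local Open Scope ring_scope.

Section Aux.
Variable R : realType.
Variable le : IV R -> IV R -> bool.
Hypothesis hle : admissible le.

Lemma ivle_refl X : le X X. Proof. by case: hle => h _ _ _ _; apply: h. Qed.
Lemma ivle_anti X Y : le X Y -> le Y X -> X = Y. Proof. by case: hle => _ h _ _ _; apply: h. Qed.
Lemma ivle_trans X Y Z : le X Y -> le Y Z -> le X Z. Proof. by case: hle => _ _ h _ _; apply: h. Qed.
Lemma ivle_total X Y : le X Y || le Y X. Proof. by case: hle => _ _ _ h _; apply: h. Qed.

Lemma le0 X : le (iv0 R) X.
Proof.
case: hle => _ _ _ _ h; apply: h => /=; case: X => a b /= /andP[/andP[h0 h1] h2].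
  by []. exact: (Order.POrderTheory.le_trans h0 h1).
Qed.

Lemma le1 X : le X (iv1 R).
Proof.
case: hle => _ _ _ _ h; apply: h => /=; case: X => a b /= /andP[/andP[h0 h1] h2].
  exact: (Order.POrderTheory.le_trans h1 h2). by [].
Qed.

Lemma ivmaxl a b : le a (ivmax le a b).
Proof. rewrite /ivmax; case: ifP => // _; exact: ivle_refl. Qed.
Lemma ivmaxr a b : le b (ivmax le a b).
Proof.
rewrite /ivmax; case: ifP => h; first exact: ivle_refl.
by move: (ivle_total a b); rewrite h.
Qed.


Lemma ivMax_ub n (Y : 'I_n -> IV R) i : le (Y i) (ivMax le Y).
Proof.
rewrite /ivMax; have : i \in enum 'I_n by rewrite mem_enum.
elim: (enum 'I_n) => //= a l IH; rewrite inE => /orP[/eqP->|/IH h].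
  exact: ivmaxl.
exact: ivle_trans h (ivmaxr _ _).
Qed.

Lemma ivMax_lub n (Y : 'I_n -> IV R) Z : (forall i, le (Y i) Z) -> le (ivMax le Y) Z.
Proof.
move=> h; rewrite /ivMax; elim: (enum 'I_n) => [|a l IH] /=; first exact: le0.
by rewrite /ivmax; case: ifP.
Qed.

Lemma Eset0 n (s : 'S_n) (i : 'I_n) : i = 0%N :> nat -> Eset s i = [set: 'I_n].
Proof.
move=> i0; apply/setP => x; rewrite inE.
rewrite -(permKV s x); apply: imset_f; by rewrite inE i0.
Qed.

Lemma key n (X : 'I_n -> IV R) (s t : 'S_n) i :
  sorting le s X -> sorting le t X ->
  exists j, X (t j) = X (s i) /\ Eset s i \subset Eset t j.
Proof.
move=> hs ht.
set k0 := (t^-1)%g (s i).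
have Pk0 : le (X (s i)) (X (t k0)) by rewrite /k0 permKV; exact: ivle_refl.
case: (@arg_minnP _ k0 (fun j : 'I_n => le (X (s i)) (X (t j))) (fun j : 'I_n => nat_of_ord j) Pk0) => j Pj jmin.
exists j; split.
  apply: ivle_anti => //.
  have := ht _ _ (jmin _ Pk0); by rewrite /k0 permKV.
apply/subsetP => y /imsetP[k]; rewrite inE => ik ->.
have Pl : le (X (s i)) (X (t ((t^-1)%g (s k)))) by rewrite permKV; exact: hs.
rewrite -(permKV t (s k)); apply: imset_f; rewrite inE; exact: jmin.
Qed.

Lemma defined_max n (F : IV R -> IV R -> IV R) (m : {set 'I_n} -> IV R) :
  (forall X Y Z, le Y Z -> le (F X Y) (F X Z)) ->
  (forall A B : {set 'I_n}, A \subset B -> le (m A) (m B)) ->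
  SFG_defined le F (ivMax le) m.
Proof.
move=> hF hm X.
suff H : forall s t : 'S_n, sorting le s X -> sorting le t X ->
   le (SFG_val F (ivMax le) m s X) (SFG_val F (ivMax le) m t X).
  by move=> s t hs ht; apply: ivle_anti; apply: H.
move=> s t hs ht; apply: ivMax_lub => i.
have [j [e sub]] := key i hs ht.
apply: ivle_trans (ivMax_ub _ j); rewrite e; apply: hF; exact: hm.
Qed.

Lemma idem_max n (hn : (0 < n)%N) (F : IV R -> IV R -> IV R) (m : {set 'I_n} -> IV R) :
  (forall X, F X (iv1 R) = X) ->
  (forall X Y Z, le Y Z -> le (F X Y) (F X Z)) ->
  IVfuzzy_measure le m -> SFG_idempotent le F (ivMax le) m.
Proof.
move=> h1 hF [_ mT hm] X s _; rewrite /SFG_val.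
apply: ivle_anti.
  apply: ivMax_lub => i; rewrite -{2}(h1 X) -mT; apply: hF; apply: hm; exact: subsetT.
have := ivMax_ub (fun i => F X (m (Eset s i))) (Ordinal hn).
by rewrite /= Eset0 // mT h1.
Qed.

Lemma ivmin_mono X Y Z : le Y Z -> le (ivmin le X Y) (ivmin le X Z).
Proof.
move=> yz; rewrite /ivmin; case: ifP => xy; case: ifP => xz.
- exact: ivle_refl.
- have := ivle_trans xy yz; by rewrite xz.
- by move: (ivle_total X Y); rewrite xy.
- exact: yz.
Qed.

Lemma ivmin1 X : ivmin le X (iv1 R) = X.
Proof. by rewrite /ivmin le1. Qed.

End Aux.

Theorem corollary2 (R : realType) (n : nat) (hn : (0 < n)%N)
  (le : IV R -> IV R -> bool) (hle : admissible le) :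
  (* (i) *)
  (forall F : IV R -> IV R -> IV R,
     (forall X, F X (iv1 R) = X) ->
     (forall X Y Z, le Y Z -> le (F X Y) (F X Z)) ->
     forall m : {set 'I_n} -> IV R, IVfuzzy_measure le m ->
       SFG_defined le F (ivMax le) m /\ SFG_idempotent le F (ivMax le) m)
  /\
  (* (ii) *)
  (forall G : ('I_n -> IV R) -> IV R,
     (G = ivMax le \/ G = Proj1 hn) ->
     forall m : {set 'I_n} -> IV R, IVfuzzy_measure le m ->
       SFG_defined le (ivmin le) G m /\ SFG_idempotent le (ivmin le) G m)
  /\
  (* (iii) *)
  (forall m : {set 'I_n} -> IV R, IVfuzzy_measure le m ->
     SFG_defined le (ivmin le) (ivMax le) m /\
     SFG_idempotent le (ivmin le) (ivMax le) m).
Proof.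
have partI : forall F : IV R -> IV R -> IV R,
     (forall X, F X (iv1 R) = X) ->
     (forall X Y Z, le Y Z -> le (F X Y) (F X Z)) ->
     forall m : {set 'I_n} -> IV R, IVfuzzy_measure le m ->
       SFG_defined le F (ivMax le) m /\ SFG_idempotent le F (ivMax le) m.
  move=> F h1 hF m hm; split; last exact: idem_max.
  by case: hm => _ _ hm; apply: defined_max.
have partIII : forall m : {set 'I_n} -> IV R, IVfuzzy_measure le m ->
     SFG_defined le (ivmin le) (ivMax le) m /\
     SFG_idempotent le (ivmin le) (ivMax le) m.
  move=> m hm; apply: partI => //; [exact: ivmin1 | exact: ivmin_mono].
split=> //; split=> // G [->|->] m hm; first exact: partIII.
case: hm => m0 mT hmono.
have E0 : forall s : 'S_n, Eset s (Ordinal hn) = [set: 'I_n] by move=> s; apply: Eset0.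
split.
  move=> X s t hs ht; rewrite /SFG_val /Proj1 !E0 mT !ivmin1 //.
  apply: (ivle_anti hle).
    have := hs (Ordinal hn) ((s^-1)%g (t (Ordinal hn))) isT; by rewrite permKV.
  have := ht (Ordinal hn) ((t^-1)%g (s (Ordinal hn))) isT; by rewrite permKV.
move=> X s _; by rewrite /SFG_val /Proj1 E0 mT ivmin1.
Qed.
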